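(* Let $(T,f,(\le_h))$ be an ordered merge tree and let $\sqsubseteq_L$ be the relation on $L(T)$ given by $u_1\sqsubseteq_L u_2$ iff $\mathrm{anc}_h(u_1)\le_h\mathrm{anc}_h(u_2)$ with $h=\max(f(u_1),f(u_2))$. Then $\sqsubseteq_L$ separates subtrees: for all leaves $u,u_1,u_2\in L(T)$ with $u_1\sqsubseteq_L u\sqsubseteq_L u_2$, we have $u\in T_{\mathrm{lca}(u_1,u_2)}$.
   Context: A merge tree $(T,f)$: a finite rooted tree $T$ identified with its topological realisation, with a continuous $f\colon T\to\mathbb{R}\cup\{\infty\}$ strictly increasing towards the root, $f(v)=\infty$ iff $v$ is the root; lowest leaf at height $0$; $L(T)$ is the set of leaves. $x_1\preceq x_2$ iff there is an $f$-increasing path from $x_1$ to $x_2$; $T_x$ is the subtree of descendants of $x$; $\mathrm{lca}$ is the lowest common ancestor; $\mathrm{anc}_h(x)$ is the unique ancestor of $x$ at height $h\ge f(x)$; $\mathbb{L}_h=\{x:f(x)=h\}$. A layer-order is a family $(\le_h)_{h\ge0}$ of total orders on the $\mathbb{L}_h$ that is consistent: for $h_1\le h_2$ and $x_1,x_2\in\mathbb{L}_{h_1}$, $x_1\le_{h_1}x_2$ implies $\mathrm{anc}_{h_2}(x_1)\le_{h_2}\mathrm{anc}_{h_2}(x_2)$. An ordered merge tree is $(T,f,(\le_h))$. *)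

(* Defs.v *)
From Stdlib Require Import Reals.
From mathcomp Require Import all_boot.
Set Implicit Arguments. Unset Strict Implicit.

Definition anc (V : Type) (par : V -> V) (x y : V) : Prop :=
  exists n : nat, iter n par x = y.

Definition is_leaf (V : Type) (r : V) (par : V -> V) (u : V) : Prop :=
  u <> r /\ forall w, par w <> u.

(* A merge tree, given combinatorially: finite vertex set, root, parent map
   (par root = root), and heights of the non-root vertices; the root has
   height +infinity (the value mt_f mt_root is irrelevant and never used). *)
Record merge_tree := MergeTree {
  mt_V : finType;
  mt_root : mt_V;
  mt_par : mt_V -> mt_V;
  mt_f : mt_V -> R;
  mt_par_root : mt_par mt_root = mt_root;
  mt_rooted : forall v, anc mt_par v mt_root;
  mt_incr : forall v, v <> mt_root -> mt_par v <> mt_root ->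
              Rlt (mt_f v) (mt_f (mt_par v));
  mt_lowest_leaf : (exists u, is_leaf mt_root mt_par u /\ mt_f u = R0) /\
                   (forall u, is_leaf mt_root mt_par u -> Rle R0 (mt_f u))
}.

Section MT.
Variable T : merge_tree.
Local Notation V := (mt_V T).
Local Notation r := (@mt_root T).
Local Notation par := (@mt_par T).
Local Notation f := (@mt_f T).

Definition leaf (u : V) : Prop := is_leaf r par u.
Definition below (x y : V) : Prop := anc par x y.

(* Points of the topological realisation at height h correspond bijectively
   to the non-root vertices v whose upward edge [v, par v) contains height h:
   the point at height h on the edge from v to par v (the vertex v itself if
   f v = h).  alive h v  says v represents a point of the level set L_h. *)
Definition alive (h : R) (v : V) : Prop :=
  v <> r /\ Rle (f v) h /\ (par v = r \/ Rlt h (f (par v))).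

Definition layer_order (le : R -> V -> V -> Prop) : Prop :=
  (forall h, Rle R0 h ->
     (forall x, alive h x -> le h x x) /\
     (forall x y, alive h x -> alive h y -> le h x y -> le h y x -> x = y) /\
     (forall x y z, alive h x -> alive h y -> alive h z ->
        le h x y -> le h y z -> le h x z) /\
     (forall x y, alive h x -> alive h y -> le h x y \/ le h y x)) /\
  (forall h1 h2 x1 x2 y1 y2, Rle R0 h1 -> Rle h1 h2 ->
     alive h1 x1 -> alive h1 x2 -> le h1 x1 x2 ->
     below x1 y1 -> alive h2 y1 -> below x2 y2 -> alive h2 y2 ->
     le h2 y1 y2).

(* u1 ⊑_L u2 : anc_h(u1) <=_h anc_h(u2), h = max (f u1) (f u2);
   anc_h(u) is represented by the (unique) vertex above u alive at h. *)
Definition sqL (le : R -> V -> V -> Prop) (u1 u2 : V) : Prop :=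
  let h := Rmax (f u1) (f u2) in
  exists w1 w2, below u1 w1 /\ alive h w1 /\ below u2 w2 /\ alive h w2 /\
                le h w1 w2.

Definition is_lca (w x y : V) : Prop :=
  below x w /\ below y w /\ forall w', below x w' -> below y w' -> below w w'.

End MT.

(* Main.v *)
Require Import Defs.
From Stdlib Require Import Reals Lra Classical.
From mathcomp Require Import all_boot.
Set Implicit Arguments. Unset Strict Implicit.

Section Aux.
Variable T : merge_tree.
Local Notation V := (mt_V T).
Local Notation r := (@mt_root T).
Local Notation par := (@mt_par T).
Local Notation f := (@mt_f T).
Local Notation below := (@below T).
Local Notation alive := (@alive T).
Local Notation leaf := (@leaf T).

Lemma iter_root n : iter n par r = r.
Proof. elim: n => //= n ->; exact: mt_par_root. Qed.

Lemma below_refl x : below x x.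
Proof. by exists 0%N. Qed.

Lemma below_par_step x y : below x y -> x <> y -> below (par x) y.
Proof.
case=> [[|n]] /= H Hne; first by [].
by exists n; rewrite -H; symmetry; exact: iterSr.
Qed.

Lemma below_total u x y : below u x -> below u y -> below x y \/ below y x.
Proof.
case=> n <- [m <-].
case: (leqP n m) => H.
- left; exists (m - n)%N; by rewrite -iterD subnK.
- right; exists (n - m)%N; rewrite -iterD subnK //; exact: ltnW.
Qed.

Lemma mono_aux n x : iter n par x <> r -> x <> r /\ Rle (f x) (f (iter n par x)).
Proof.
elim: n x => [|n IH] x /= H; first by split => //; apply Rle_refl.
have Ei := iterSr n par x; rewrite /= in Ei; rewrite Ei in H *.
have [Hp Hle] := IH (par x) H.
have Hx : x <> r by move=> E; apply: Hp; rewrite E mt_par_root.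
split => //.
have := mt_incr Hx Hp; lra.
Qed.

Lemma mono x y : below x y -> y <> r -> Rle (f x) (f y).
Proof. case=> n <- H; by have [_ ?] := @mono_aux n x H. Qed.

Lemma below_nonroot x y : below x y -> y <> r -> x <> r.
Proof. case=> n <- H; by have [? _] := @mono_aux n x H. Qed.

Lemma anc_exists u H : u <> r -> Rle (f u) H -> exists A, below u A /\ alive H A.
Proof.
have [n Hn] := mt_rooted u.
elim: n u Hn => [|n IH] u Hn Hu Hf; first by [].
have Ei := iterSr n par u; rewrite /= in Ei; rewrite /= Ei in Hn.
case: (classic (par u = r)) => Hp.
  exists u; split; [exact: below_refl | by split; [|split; [|left]]].
case: (Rlt_le_dec H (f (par u))) => Hh.
  exists u; split; [exact: below_refl | by split; [|split; [|right]]].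
have [A [HA1 HA2]] := IH (par u) Hn Hp Hh.
exists A; split => //.
case: HA1 => k Hk; exists k.+1; by rewrite iterSr.
Qed.

Lemma lift_below u x y h H : Rle h H -> alive h x -> alive H y ->
  below u x -> below u y -> below x y.
Proof.
move=> hH [Hx [Hfx _]] [Hy [_ Hay]] ux uy.
case: (below_total ux uy) => // yx.
case: (classic (y = x)) => [->|Hne]; first exact: below_refl.
have px := below_par_step yx Hne.
have pr := below_nonroot px Hx.
have := mono px Hx.
case: Hay => // Hlt; lra.
Qed.

Lemma leaf_top x y : leaf y -> below x y -> x = y.
Proof.
move=> [_ Hl] [[|n]] //= E.
by case: (Hl _ E).
Qed.

Lemma leaf_f0 u : leaf u -> Rle R0 (f u).
Proof. move=> H; exact: (mt_lowest_leaf T).2 _ H. Qed.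

Lemma self_alive v : v <> r -> alive (f v) v.
Proof.
move=> Hv; split => //; split; first exact: Rle_refl.
case: (classic (par v = r)) => Hp; [left | right] => //.
exact: mt_incr.
Qed.

End Aux.

Theorem lemma3 (T : merge_tree) (le : R -> mt_V T -> mt_V T -> Prop) :
  layer_order le ->
  forall u u1 u2 : mt_V T, leaf u -> leaf u1 -> leaf u2 ->
    sqL le u1 u -> sqL le u u2 ->
    forall w, is_lca w u1 u2 -> below u w.
Proof.
move=> [Htot Hcons] u u1 u2 Lu Lu1 Lu2 S1 S2 w [Bw1 [Bw2 _]].
case: (classic (w = mt_root T)) => Hw.
  rewrite Hw; exact: mt_rooted.
have f1 := mono Bw1 Hw.
have f2 := mono Bw2 Hw.
have g := leaf_f0 Lu; have g1 := leaf_f0 Lu1; have g2 := leaf_f0 Lu2.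
have Hu : u <> mt_root T by case: Lu.
case: S1 => [a1 [b1 [Ba1 [Aa1 [Bb1 [Ab1 Le1]]]]]].
case: S2 => [b2 [a2 [Bb2 [Ab2 [Ba2 [Aa2 Le2]]]]]].
have m1 := Rmax_l (mt_f u1) (mt_f u); have m1' := Rmax_r (mt_f u1) (mt_f u).
have m2 := Rmax_l (mt_f u) (mt_f u2); have m2' := Rmax_r (mt_f u) (mt_f u2).
have h1ge : Rle R0 (Rmax (mt_f u1) (mt_f u)) by lra.
have h2ge : Rle R0 (Rmax (mt_f u) (mt_f u2)) by lra.
have trans_b : forall x y z : mt_V T, below x y -> below y z -> below x z.
  move=> x y z [n <-] [m <-]; exists (m + n)%N; by rewrite iterD.
case: (Rle_lt_dec (mt_f u) (mt_f w)) => Hc.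
-
  have Aw := self_alive Hw.
  have [B [BuB AB]] := anc_exists Hu Hc.
  have hA : Rle (Rmax (mt_f u1) (mt_f u)) (mt_f w) by apply Rmax_lub.
  have hB : Rle (Rmax (mt_f u) (mt_f u2)) (mt_f w) by apply Rmax_lub.
  have L1 : le (mt_f w) w B.
    apply: (Hcons (Rmax (mt_f u1) (mt_f u)) _ a1 b1) => //.
    - exact: (lift_below hA Aa1 Aw Ba1 Bw1).
    - exact: (lift_below hA Ab1 AB Bb1 BuB).
  have L2 : le (mt_f w) B w.
    apply: (Hcons (Rmax (mt_f u) (mt_f u2)) _ b2 a2) => //.
    - exact: (lift_below hB Ab2 AB Bb2 BuB).
    - exact: (lift_below hB Aa2 Aw Ba2 Bw2).
  have gw : Rle R0 (mt_f w) by lra.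
  have [_ [Hanti _]] := Htot _ gw.
  by rewrite -(Hanti _ _ Aw AB L1 L2) in BuB.
-
  have Au := self_alive Hu.
  have [A [BwA AA]] := anc_exists Hw (Rlt_le _ _ Hc).
  have hA : Rle (Rmax (mt_f u1) (mt_f u)) (mt_f u) by apply Rmax_lub; lra.
  have hB : Rle (Rmax (mt_f u) (mt_f u2)) (mt_f u) by apply Rmax_lub; lra.
  have L1 : le (mt_f u) A u.
    apply: (Hcons (Rmax (mt_f u1) (mt_f u)) _ a1 b1) => //.
    - exact: (lift_below hA Aa1 AA Ba1 (trans_b _ _ _ Bw1 BwA)).
    - exact: (lift_below hA Ab1 Au Bb1 (below_refl _)).
  have L2 : le (mt_f u) u A.
    apply: (Hcons (Rmax (mt_f u) (mt_f u2)) _ b2 a2) => //.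
    - exact: (lift_below hB Ab2 Au Bb2 (below_refl _)).
    - exact: (lift_below hB Aa2 AA Ba2 (trans_b _ _ _ Bw2 BwA)).
  have [_ [Hanti _]] := Htot _ g.
  have E := Hanti _ _ AA Au L1 L2.
  rewrite E in BwA.
  rewrite (leaf_top Lu BwA); exact: below_refl.
Qed.
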